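(* Every tree is complement critical. Every tree which is not a star is vector critical.
   Context: All graphs are finite and simple with nonempty vertex set; $\overline{G}$ denotes the complement of $G$. A star is a graph $K_{1,m}$. An orthogonal vector representation of a graph $G=(V,E)$ in $\mathbb{R}^d$ is a map $\phi:V\to\mathbb{R}^d$ with $\phi(v)\neq 0$ for all $v$, and for distinct $u,v$: $\langle\phi(u),\phi(v)\rangle=0$ if and only if $uv\notin E$. ${\rm mvr}(G)$ is the smallest $d$ for which such a representation exists. $G$ is vector critical if ${\rm mvr}(H)<{\rm mvr}(G)$ for every proper induced subgraph $H$ of $G$ (with nonempty vertex set). $G$ is complement critical if ${\rm mvr}(H)+{\rm mvr}(\overline{H})<{\rm mvr}(G)+{\rm mvr}(\overline{G})$ for every proper induced subgraph $H$ of $G$ (with nonempty vertex set). *)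

(* Defs.v *)
From Stdlib Require Import ClassicalEpsilon.
From mathcomp Require Import all_boot all_order all_algebra.
From mathcomp Require Import Rstruct.

Set Implicit Arguments.
Unset Strict Implicit.
Unset Printing Implicit Defensive.

Import Order.TTheory GRing.Theory Num.Theory.
Local Open Scope ring_scope.

(* A finite simple graph is given by a vertex type T : finType (nonempty)
   and a symmetric irreflexive adjacency relation e : rel T. *)

Definition compl_rel (T : finType) (e : rel T) : rel T :=
  fun u v => (u != v) && ~~ e u v.

Definition dotR (d : nat) (x y : 'rV[Rdefinitions.R]_d) : Rdefinitions.R := \sum_(i < d) x 0 i * y 0 i.

Definition orth_rep (T : finType) (e : rel T) (S : {set T}) (d : nat)
  (phi : T -> 'rV[Rdefinitions.R]_d) : Prop :=
  (forall v, v \in S -> phi v != 0) /\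
  (forall u v, u \in S -> v \in S -> u != v ->
     (dotR (phi u) (phi v) = 0 <-> ~~ e u v)).

Definition has_orth_rep (T : finType) (e : rel T) (S : {set T}) (d : nat) : Prop :=
  exists phi : T -> 'rV[Rdefinitions.R]_d, orth_rep e S phi.

Definition has_orth_rep_b (T : finType) (e : rel T) (S : {set T}) : pred nat :=
  fun d => if excluded_middle_informative (has_orth_rep e S d) then true else false.

(* mvr of the induced subgraph G[S]: the least d admitting an orthogonal
   representation in R^d (such a d always exists; 0 is a dummy fallback). *)
Definition mvr (T : finType) (e : rel T) (S : {set T}) : nat :=
  match excluded_middle_informative (exists d, has_orth_rep_b e S d) with
  | left h => ex_minn h
  | right _ => 0%N
  end.

Definition vector_critical (T : finType) (e : rel T) : Prop :=
  forall S : {set T}, S != set0 -> S \proper [set: T] ->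
    (mvr e S < mvr e [set: T])%N.

Definition complement_critical (T : finType) (e : rel T) : Prop :=
  forall S : {set T}, S != set0 -> S \proper [set: T] ->
    (mvr e S + mvr (compl_rel e) S < mvr e [set: T] + mvr (compl_rel e) [set: T])%N.

Definition is_connected (T : finType) (e : rel T) : Prop :=
  forall u v : T, connect e u v.

Definition is_acyclic (T : finType) (e : rel T) : Prop :=
  forall s : seq T, uniq s -> (3 <= size s)%N -> ~~ cycle e s.

Definition is_tree (T : finType) (e : rel T) : Prop :=
  is_connected e /\ is_acyclic e.

Definition is_star (T : finType) (e : rel T) : Prop :=
  exists c : T, forall u v : T,
    e u v = ((u == c) && (v != c)) || ((v == c) && (u != c)).

(* Main.v *)
Require Import Defs.
From Stdlib Require Import ClassicalEpsilon.
From mathcomp Require Import all_boot all_order all_algebra.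
From mathcomp Require Import Rstruct.
From mathcomp Require Import ring.
From mathcomp Require Import zify.
Set Implicit Arguments.
Unset Strict Implicit.
Unset Printing Implicit Defensive.

Section TreeStruct.
Variables (T : finType) (e : rel T).
Hypotheses (sym : symmetric e) (irr : irreflexive e) (conn : is_connected e)
  (acyc : is_acyclic e).
Variable r : T.

Fixpoint reach (k : nat) : {set T} :=
  if k is k'.+1 then reach k' :|: [set y | [exists x in reach k', e x y]]
  else [set r].

Lemma reach_S k : reach k \subset reach k.+1.
Proof. by rewrite /= subsetUl. Qed.

Lemma reach_edge k x y : x \in reach k -> e x y -> y \in reach k.+1.
Proof.
by move=> xk exy; rewrite /= in_setU inE; apply/orP; right; apply/existsP; exists x; rewrite xk.
Qed.

Lemma reach_path p x k : x \in reach k -> path e x p -> last x p \in reach (k + size p).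
Proof.
elim: p x k => [|y p IH] x k /=; first by rewrite addn0.
move=> xk /andP [exy pp]; rewrite addnS -addSn; apply: IH pp.
exact: reach_edge exy.
Qed.

Lemma reach_ex v : exists k, v \in reach k.
Proof.
have /connectP [p pp ->] := conn r v; exists (0 + size p)%N.
by apply: reach_path pp; rewrite /= inE.
Qed.

Definition dist (v : T) : nat :=
  match excluded_middle_informative (exists k, v \in reach k) with
  | left h => ex_minn h
  | right _ => 0%N
  end.

Lemma dist_reach v : v \in reach (dist v).
Proof.
rewrite /dist; case: excluded_middle_informative => [h|[]]; last exact: reach_ex.
by case: ex_minnP.
Qed.

Lemma dist_min v k : v \in reach k -> (dist v <= k)%N.
Proof.
rewrite /dist; case: excluded_middle_informative => [h|[]]; last exact: reach_ex.
by case: ex_minnP => m _ H; apply: H.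
Qed.

Lemma dist_r : dist r = 0%N.
Proof. by apply/eqP; rewrite -leqn0; apply: dist_min; rewrite /= inE. Qed.

Lemma dist0 v : dist v = 0%N -> v = r.
Proof. by move=> h; have := dist_reach v; rewrite h /= inE => /eqP. Qed.

Lemma dist_edge x y : e x y -> (dist y <= (dist x).+1)%N.
Proof. by move=> exy; apply: dist_min; apply: reach_edge exy; apply: dist_reach. Qed.

Lemma dist_down v : v != r -> exists u, e v u && (dist u < dist v)%N.
Proof.
move=> vr; case Hd: (dist v) => [|k]; first by rewrite (dist0 Hd) eqxx in vr.
have := dist_reach v; rewrite Hd /= in_setU => /orP [vk|].
  by have := dist_min vk; rewrite Hd ltnn.
rewrite inE => /existsP [x /andP [xk exv]]; exists x; rewrite sym exv /=.
exact: dist_min.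
Qed.

Definition par (v : T) : T := odflt v [pick u | e v u && (dist u < dist v)%N].

Lemma par_spec v : v != r -> e v (par v) && (dist (par v) < dist v)%N.
Proof.
move=> vr; rewrite /par; case: pickP => [u //|H].
by have [u Hu] := dist_down vr; rewrite H in Hu.
Qed.

Lemma par_edge v : v != r -> e v (par v).
Proof. by move/par_spec/andP => []. Qed.

Lemma par_dist v : v != r -> (dist (par v) < dist v)%N.
Proof. by move/par_spec/andP => []. Qed.

Section Avoid.
Variable w : T.
Definition eav : rel T := fun x y => e x y && (x != w) && (y != w).

Lemma eav_sym : symmetric eav.
Proof. by move=> x y; rewrite /eav sym andbAC. Qed.

Lemma chain_conn_aux n x : (dist x <= n)%N -> (dist x < dist w)%N -> connect eav x r.
Proof.
elim: n x => [|n IH] x dx kw.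
  by move: dx; rewrite leqn0 => /eqP/dist0 ->; apply: connect0.
have [->|xr] := eqVneq x r; first exact: connect0.
have pd := par_dist xr.
apply: (connect_trans (connect1 (_ : eav x (par x))) (IH (par x) _ _)).
- rewrite /eav /= par_edge //=; apply/andP; split; apply/eqP => h.
    by move: kw; rewrite h ltnn.
  by move: kw; rewrite -h => /(ltn_trans pd); rewrite ltnn.
- by rewrite -ltnS; apply: leq_trans dx.
- exact: ltn_trans kw.
Qed.

Lemma chain_conn k x : dist x = k -> (k < dist w)%N -> connect eav x r.
Proof. by move=> <-; apply: chain_conn_aux. Qed.

Lemma path_avoid x p : path eav x p -> all (fun y => y != w) p.
Proof.
elim: p x => [|y p IH] x //= /andP [/andP [/andP [_ _] yw] pp].
by rewrite yw (IH _ pp).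
Qed.

Lemma no_cycle a b : a != b -> e w a -> e w b -> connect eav a b -> False.
Proof.
move=> ab ewa ewb /connectP [p pp bl].
move: bl; case: (shortenP pp) => p' pp' up' sub bl.
have aw : a != w by apply/eqP => h; rewrite h irr in ewa.
have wp : w \notin a :: p'.
  rewrite in_cons eq_sym (negbTE aw) /=; apply/negP => /sub.
  by move/(allP (path_avoid pp)); rewrite eqxx.
have pe : path e a p' by apply: sub_path pp' => x y /andP [/andP []].
have := acyc (s := w :: a :: p'); rewrite [uniq (w :: _)]cons_uniq wp up' => /(_ isT).
case: p' {pp' up' sub wp} pe bl => [|z p'] pe bl.
  by rewrite /= in bl; rewrite bl eqxx in ab.
move=> /(_ isT); rewrite /cycle /= ewa /=; rewrite -cats1 cat_path /=.
move: pe => /= /andP [-> ->]; rewrite /= in bl; by rewrite -bl sym ewb.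
Qed.
End Avoid.

Lemma edge_par_main u w : e u w -> (dist u <= dist w)%N -> w != r /\ u = par w.
Proof.
move=> euw duw.
have wr : w != r.
  apply/eqP => wr; move: duw; rewrite wr dist_r leqn0 => /eqP/dist0 ur.
  by rewrite ur wr irr in euw.
split => //; apply/eqP; apply/negP => /negP ub.
apply: (no_cycle (w := w) ub); first by rewrite sym.
  exact: par_edge.
have uw : u != w by apply/eqP => h; rewrite h irr in euw.
have pw := par_dist wr.
have pw' : par w != w by apply/eqP => h; rewrite h ltnn in pw.
apply: connect_trans (_ : connect (eav w) r (par w)).
  move: duw; rewrite leq_eqVlt => /orP [/eqP du|du]; last exact: chain_conn erefl du.
  have ur : u != r by apply/eqP => h; move: pw; rewrite -du h dist_r.
  have pu := par_dist ur.
  apply: connect_trans (connect1 (_ : eav w u (par u))) (chain_conn erefl _); last by rewrite -du.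
  rewrite /eav /= par_edge // uw /=; apply/eqP => h; move: pu; rewrite h du ltnn //.
rewrite (sym_connect_sym (@eav_sym w)); exact: chain_conn erefl pw.
Qed.

Lemma edge_par u w : e u w -> (w != r /\ u = par w) \/ (u != r /\ w = par u).
Proof.
move=> euw; case: (leqP (dist u) (dist w)) => h.
  by left; apply: edge_par_main.
by right; apply: edge_par_main; [rewrite sym | apply: ltnW].
Qed.

Lemma tree_parent : exists (par : T -> T) (dist : T -> nat),
  (forall v, v != r -> e v (par v)) /\ (forall v, v != r -> (dist (par v) < dist v)%N) /\
  (forall u w, e u w -> (w != r /\ u = par w) \/ (u != r /\ w = par u)).
Proof.
exists par, dist; split; first exact: par_edge.
split; first exact: par_dist.
exact: edge_par.
Qed.
End TreeStruct.

Import Order.TTheory GRing.Theory Num.Theory.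
Local Open Scope ring_scope.
Local Notation R := Rdefinitions.R.

Section MvrLemmas.
Variables (T : finType) (e : rel T).

Lemma has_orth_rep_bP (S : {set T}) d : has_orth_rep_b e S d <-> has_orth_rep e S d.
Proof.
rewrite /has_orth_rep_b; case: excluded_middle_informative => //; split => //.
Qed.

Lemma mvr_le (S : {set T}) d : has_orth_rep e S d -> (mvr e S <= d)%N.
Proof.
move=> H; rewrite /mvr; case: excluded_middle_informative => [h|[]]; last first.
  by exists d; apply/has_orth_rep_bP.
case: ex_minnP => m _; apply; exact/has_orth_rep_bP.
Qed.

Lemma mvr_spec (S : {set T}) d : has_orth_rep e S d -> has_orth_rep e S (mvr e S).
Proof.
move=> H; rewrite /mvr; case: excluded_middle_informative => [h|[]]; last first.
  by exists d; apply/has_orth_rep_bP.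
by case: ex_minnP => m /has_orth_rep_bP.
Qed.

Lemma has_orth_rep_sub (S S' : {set T}) d : S \subset S' ->
  has_orth_rep e S' d -> has_orth_rep e S d.
Proof.
move=> /subsetP sub [phi [H1 H2]]; exists phi; split.
  by move=> v /sub; apply: H1.
by move=> u v /sub uS /sub vS; apply: H2.
Qed.

Lemma mvr_mono (S S' : {set T}) d : S \subset S' ->
  has_orth_rep e S' d -> (mvr e S <= mvr e S')%N.
Proof.
move=> sub H; apply: mvr_le; apply: has_orth_rep_sub sub _; exact: mvr_spec H.
Qed.

Lemma mvr_ge (S : {set T}) d k : has_orth_rep e S d ->
  (forall d', has_orth_rep e S d' -> (k <= d')%N) -> (k <= mvr e S)%N.
Proof. by move=> H1 H2; apply: H2; exact: mvr_spec H1. Qed.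

End MvrLemmas.

Definition ivec (K : finType) (P : pred K) : 'rV[R]_#|K| :=
  \row_i (P (enum_val i))%:R.

Lemma dot_ivec (K : finType) (P Q : pred K) :
  dotR (ivec P) (ivec Q) = 0 <-> (forall k, ~~ (P k && Q k)).
Proof.
rewrite /dotR; split.
  move=> H k.
  have nn : forall i : 'I_#|K|, true -> 0 <= ivec P 0 i * ivec Q 0 i.
    by move=> i _; rewrite !mxE; case: (P _); case: (Q _); rewrite /= ?mulr1 ?mul0r ?mulr0.
  have := psumr_eq0P nn H (i := enum_rank k) isT; rewrite !mxE enum_rankK.
  case: (P k); case: (Q k) => //= H1.
  by have := oner_neq0 R; rewrite -H1 mulr1 eqxx.
move=> H; apply: big1 => i _; rewrite !mxE.
by have := H (enum_val i); case: (P _); case: (Q _); rewrite /= ?mul0r ?mulr0.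
Qed.

Lemma ivec_neq0 (K : finType) (P : pred K) k : P k -> ivec P != 0.
Proof.
move=> Pk; apply/eqP => /matrixP /(_ 0 (enum_rank k)); rewrite !mxE enum_rankK Pk.
by move/eqP; rewrite oner_eq0.
Qed.

Definition gen_pred (T : finType) (e : rel T) (u : T) : pred (T * T)%type :=
  fun p => ((p.1 == u) && (p.2 == u)) || (e p.1 p.2 && ((p.1 == u) || (p.2 == u))).

Lemma gen_rep (T : finType) (e : rel T) (S : {set T}) : symmetric e ->
  has_orth_rep e S #|{: T * T}|.
Proof.
move=> sym; exists (fun u => ivec (gen_pred e u)); split.
  by move=> v _; apply: (@ivec_neq0 _ _ (v, v)); rewrite /gen_pred /= eqxx.
move=> u v _ _ uv; rewrite dot_ivec; split.
  move=> H; apply/negP => euv; have := H (u, v).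
  by rewrite /gen_pred /= euv !eqxx /= !orbT.
move=> neuv [x y]; rewrite /gen_pred /=; apply/negP => /andP [Hu Hv].
have uv' : u == v = false by apply/negbTE.
case/orP: Hu => [/andP [/eqP xu /eqP yu]|/andP [exy Hu]].
  by move: Hv; rewrite xu yu uv' /= andbF.
case/orP: Hv => [/andP [/eqP xv /eqP yv]|/andP [_ Hv]].
  by move: Hu; rewrite xv yv eq_sym uv'.
case/orP: Hu => /eqP xu; case/orP: Hv => /eqP xv.
- by rewrite -xu -xv eqxx in uv.
- by rewrite -xu -xv exy in neuv.
- by rewrite -xu -xv sym exy in neuv.
- by rewrite -xu -xv eqxx in uv.
Qed.

Section Dot.
Variable d : nat.
Implicit Types x y z : 'rV[R]_d.

Lemma dotRC x y : dotR x y = dotR y x.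
Proof. by apply: eq_bigr => i _; rewrite mulrC. Qed.

Lemma dotRDl x y z : dotR (x + y) z = dotR x z + dotR y z.
Proof. by rewrite /dotR -big_split; apply: eq_bigr => i _; rewrite mxE mulrDl. Qed.

Lemma dotRZl (c : R) x y : dotR (c *: x) y = c * dotR x y.
Proof. by rewrite /dotR mulr_sumr; apply: eq_bigr => i _; rewrite mxE mulrA. Qed.

Lemma dotRNl x y : dotR (- x) y = - dotR x y.
Proof. by rewrite -scaleN1r dotRZl mulN1r. Qed.

Lemma dotR0l y : dotR 0 y = 0.
Proof. by apply: big1 => i _; rewrite mxE mul0r. Qed.

Lemma dotR_suml (I : finType) (A : pred I) (f : I -> 'rV[R]_d) y :
  dotR (\sum_(i in A) f i) y = \sum_(i in A) dotR (f i) y.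
Proof.
rewrite /dotR exchange_big /=; apply: eq_bigr => j _.
by rewrite summxE mulr_suml.
Qed.

Lemma dotR_eq0 x : dotR x x = 0 -> x = 0.
Proof.
move=> H; apply/rowP => i; rewrite mxE.
have nn : forall i : 'I_d, true -> 0 <= x 0 i * x 0 i by move=> j _; rewrite -expr2 sqr_ge0.
by have /eqP := psumr_eq0P nn H (i := i) isT; rewrite mulf_eq0 orbb => /eqP.
Qed.

Definition proj z x := x - (dotR x z / dotR z z) *: z.

Lemma dot_proj z x y : dotR z z != 0 ->
  dotR (proj z x) (proj z y) = dotR x y - dotR x z * dotR y z / dotR z z.
Proof.
move=> zz; rewrite /proj dotRDl dotRNl dotRZl.
rewrite [dotR x (_ - _)]dotRC [dotR z (_ - _)]dotRC !dotRDl !dotRNl !dotRZl.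
rewrite ?[dotR z x]dotRC ?[dotR z y]dotRC.
rewrite [dotR y x]dotRC.
move: zz; set a := dotR x y; set b := dotR x z; set c := dotR y z; set q := dotR z z => zz.
by field.
Qed.

Lemma proj_self z : dotR z z != 0 -> proj z z = 0.
Proof. by move=> zz; rewrite /proj divff // scale1r subrr. Qed.

End Dot.

Section Indep.
Variables (T : finType) (e : rel T) (r : T) (par : T -> T) (dist : T -> nat).
Hypotheses (HP2 : forall v, v != r -> (dist (par v) < dist v)%N)
  (HP3 : forall u w, e u w -> (w != r /\ u = par w) \/ (u != r /\ w = par u)).
Variable d : nat.

Lemma indep_aux n (S : {set T}) (psi : T -> 'rV[R]_d) (a : T -> R) :
  #|S| = n -> r \in S -> (forall v, v \in S -> v != r -> par v \in S) ->
  (forall u w, u \in S -> w \in S -> u != w -> ~~ e u w -> dotR (psi u) (psi w) = 0) ->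
  (forall v, v \in S -> v != r -> dotR (psi v) (psi (par v)) != 0) ->
  \sum_(v in S :\ r) a v *: psi v = 0 -> forall v, v \in S :\ r -> a v = 0.
Proof.
elim: n S psi => [|n IH] S psi cS rS pS Ho Hn Hs.
  by move: cS => /eqP; rewrite cards_eq0 => /eqP S0; rewrite S0 inE in rS.
case: (set_0Vmem (S :\ r)) => [-> v|[x0 x0S]]; first by rewrite inE.
set l := [arg max_(i > x0 in S :\ r) dist i].
have [lA lmax] : l \in S :\ r /\ forall v, v \in S :\ r -> (dist v <= dist l)%N.
  by rewrite /l; case: arg_maxnP => // i iA H; split => // v /H.
have /setD1P [lr lS] := lA.
set p := par l.
have dpl : (dist p < dist l)%N by apply: HP2.
have pl : p != l by apply/eqP => h; rewrite h ltnn in dpl.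
have nchild : forall v, v \in S -> v != r -> par v != l.
  move=> v vS vr; apply/eqP => h.
  have := lmax v; rewrite !inE vr vS => /(_ isT).
  by rewrite leqNgt -h HP2.
have orth : forall v, v \in S -> v != l -> v != p -> dotR (psi v) (psi l) = 0.
  move=> v vS vl vp; apply: Ho => //; apply/negP => /HP3 [[_ h]|[vr h]].
    by rewrite h eqxx in vp.
  by have := nchild v vS vr; rewrite -h eqxx.
have pS' : p \in S by apply: pS.
have ll : dotR (psi l) (psi l) != 0.
  apply/eqP => /dotR_eq0 h; have := Hn l lS lr; rewrite h dotR0l eqxx //.
set psi' := fun v => proj (psi l) (psi v).
have dotp : forall u w, u \in S -> w \in S -> u != w -> u != l -> w != l ->
    dotR (psi' u) (psi' w) = dotR (psi u) (psi w).
  move=> u w uS wS uw ul wl; rewrite /psi' dot_proj //.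
  have [up|up] := eqVneq u p.
    by rewrite [dotR (psi w) _]orth // ?mulr0 ?mul0r ?subr0 // -up eq_sym.
  by rewrite orth // !mul0r subr0.
set S' := S :\ l.
have sum0 : \sum_(v in S' :\ r) a v *: psi' v = 0.
  have H1 : \sum_(v in S :\ r) a v *: psi' v = 0.
    rewrite /psi' /proj.
    under eq_bigr => v _ do rewrite scalerBr scalerA.
    rewrite sumrB -scaler_suml Hs.
    have -> : \sum_(i in S :\ r) a i * (dotR (psi i) (psi l) / dotR (psi l) (psi l)) = 0.
      under eq_bigr => i _ do rewrite mulrA. rewrite -mulr_suml.
      have -> : \sum_(i in S :\ r) a i * dotR (psi i) (psi l) = dotR (\sum_(v in S :\ r) a v *: psi v) (psi l).
        by rewrite dotR_suml; apply: eq_bigr => i _; rewrite dotRZl.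
      by rewrite Hs dotR0l mul0r.
    by rewrite scale0r subr0.
  rewrite (bigD1 l) //= in H1.
  rewrite /psi' proj_self // scaler0 add0r in H1.
  apply: etrans H1; apply: eq_big => [v|v _] //; rewrite /S' !inE.
  by case: (v == l); rewrite /= ?andbF // andbT.
have IH' := IH S' psi'.
have cS' : #|S'| = n by rewrite /S' (cardsD1 l S) lS in cS; case: cS.
have rS' : r \in S' by rewrite /S' !inE eq_sym lr rS.
have pS'' : forall v, v \in S' -> v != r -> par v \in S'.
  move=> v; rewrite /S' !inE => /andP [vl vS] vr.
  by rewrite nchild // pS.
have Ho' : forall u w, u \in S' -> w \in S' -> u != w -> ~~ e u w ->
    dotR (psi' u) (psi' w) = 0.
  move=> u w; rewrite /S' !inE => /andP [ul uS] /andP [wl wS] uw neuw.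
  by rewrite dotp // Ho.
have Hn' : forall v, v \in S' -> v != r -> dotR (psi' v) (psi' (par v)) != 0.
  move=> v; rewrite /S' !inE => /andP [vl vS] vr.
  have dv := HP2 vr.
  rewrite dotp ?Hn ?pS ?nchild //.
  by apply/eqP => h; rewrite -h ltnn in dv.
have A0 := IH' cS' rS' pS'' Ho' Hn' sum0.
have al : a l = 0.
  have : a l *: psi l = 0.
    rewrite -Hs (bigD1 l) //= big1 ?addr0 // => v /andP [vA vl].
    by rewrite A0 ?scale0r // /S' !inE vl; move: vA; rewrite !inE => /andP [-> ->].
  move/eqP; rewrite scaler_eq0 => /orP [/eqP //|/eqP h].
  by move: ll; rewrite h dotR0l eqxx.
move=> v vA; have [->//|vl] := eqVneq v l.
by apply: A0; move: vA; rewrite /S' !inE vl => /andP [-> ->].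
Qed.

End Indep.

Section Lower.
Variables (T : finType) (e : rel T) (r : T) (par : T -> T) (dist : T -> nat).
Hypotheses (HP1 : forall v, v != r -> e v (par v))
  (HP2 : forall v, v != r -> (dist (par v) < dist v)%N)
  (HP3 : forall u w, e u w -> (w != r /\ u = par w) \/ (u != r /\ w = par u)).

Lemma lower_bound d : has_orth_rep e [set: T] d -> (#|T|.-1 <= d)%N.
Proof.
move=> [phi [Hnz Hor]].
set A := [set: T] :\ r.
have cA : #|A| = #|T|.-1 by rewrite -cardsT (cardsD1 r [set: T]) in_setT.
have Hind := @indep_aux T e r par dist HP2 HP3 d #|[set: T]| [set: T] phi.
set M : 'M[R]_(#|A|, d) := \matrix_(i, j) (phi (enum_val i)) 0 j.
have key : forall v : 'rV[R]_#|A|, v *m M = 0 -> v = 0.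
  move=> v vM; case: (set_0Vmem A) => [A0|[x0 x0A]].
    by apply/rowP => i; have := ltn_ord i; rewrite {2}A0 cards0.
  set a := fun x => v 0 (enum_rank_in x0A x).
  have Hs : \sum_(x in [set: T] :\ r) a x *: phi x = 0.
    rewrite -/A big_enum_val; apply: etrans vM; rewrite mulmx_sum_row; apply: eq_bigr => i _.
    rewrite /a enum_valK_in; congr (_ *: _); apply/rowP => j.
    by rewrite !mxE.
  have Ho : forall u w, u \in [set: T] -> w \in [set: T] -> u != w -> ~~ e u w ->
      dotR (phi u) (phi w) = 0.
    by move=> u w _ _ uw neuw; apply/(Hor u w (in_setT _) (in_setT _) uw).
  have Hn : forall v', v' \in [set: T] -> v' != r -> dotR (phi v') (phi (par v')) != 0.
    move=> v' _ vr; apply/eqP => /(Hor v' (par v') (in_setT _) (in_setT _)).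
    have -> : v' != par v' by apply/eqP => h; have := HP2 vr; rewrite -h ltnn.
    by move=> /(_ isT); rewrite HP1.
  have H := Hind a erefl (in_setT r) (fun _ _ _ => in_setT _) Ho Hn Hs.
  apply/rowP => i; rewrite mxE.
  by have := H (enum_val i) (enum_valP i); rewrite /a enum_valK_in.
have : row_free M.
  rewrite -kermx_eq0; apply/eqP/row_matrixP => i; rewrite row0.
  by apply: key; rewrite -row_mul mulmx_ker row0.
by rewrite -row_leq_rank -cA => /leq_trans; apply; apply: rank_leq_col.
Qed.
End Lower.

Section Upper.
Variables (T : finType) (e : rel T) (r : T) (par : T -> T).
Hypotheses (sym : symmetric e) (HP1 : forall v, v != r -> e v (par v))
  (HP3 : forall u w, e u w -> (w != r /\ u = par w) \/ (u != r /\ w = par u)).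

Lemma upper (S : {set T}) c : r \in S -> c \in S -> c != r -> par c = r ->
  has_orth_rep e S #|S|.-1.
Proof.
move=> rS cS cr pc.
pose K := {x : T | x \in S :\ r}.
have cK : #|{: K}| = #|S|.-1 by rewrite card_sig (cardsD1 r S) rS.
rewrite -cK.
pose P u : pred K := fun k => (val k == u) || (par (val k) == u).
exists (fun u => ivec (P u)); split.
  move=> u uS; have [ur|ur] := eqVneq u r.
    have cA : c \in S :\ r by rewrite !inE cr cS.
    by apply: (@ivec_neq0 _ _ (exist _ c cA)); rewrite /P /= pc ur eqxx orbT.
  have uA : u \in S :\ r by rewrite !inE ur uS.
  by apply: (@ivec_neq0 _ _ (exist _ u uA)); rewrite /P /= eqxx.
move=> u w uS wS uw; rewrite dot_ivec; split.
  move=> H; apply/negP => /HP3 [[wr h]|[ur h]].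
    have wA : w \in S :\ r by rewrite !inE wr wS.
    by have := H (exist _ w wA); rewrite /P /= h !eqxx orbT.
  have uA : u \in S :\ r by rewrite !inE ur uS.
  by have := H (exist _ u uA); rewrite /P /= h !eqxx orbT.
move=> neuw [x xA]; rewrite /P /=; apply/negP.
have xr : x != r by move: xA; rewrite !inE => /andP [].
case/andP => /orP [/eqP xu|/eqP xu] /orP [/eqP xw|/eqP xw].
- by rewrite -xu -xw eqxx in uw.
- by move: neuw; rewrite -xu -xw HP1.
- by move: neuw; rewrite -xu -xw sym HP1.
- by rewrite -xu -xw eqxx in uw.
Qed.
End Upper.

Lemma compl_sym (T : finType) (e : rel T) : symmetric e -> symmetric (compl_rel e).
Proof. by move=> sym x y; rewrite /compl_rel eq_sym sym. Qed.

Lemma lower_tree (T : finType) (e : rel T) : symmetric e -> irreflexive e -> is_tree e ->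
  forall d, has_orth_rep e [set: T] d -> (#|T|.-1 <= d)%N.
Proof.
move=> sym irr [conn acyc] d H.
case: (pickP (@predT T)) => [r _|T0]; last first.
  by rewrite (eq_card0 T0).
have [par [dist [HP1 [HP2 HP3]]]] := tree_parent sym irr conn acyc r.
exact: (lower_bound HP1 HP2 HP3).
Qed.

Theorem proposition5p2 (T : finType) (e : rel T) :
  symmetric e -> irreflexive e -> (0 < #|T|)%N -> is_tree e ->
  complement_critical e /\ (~ is_star e -> vector_critical e).
Proof.
move=> sym irr n0 tree; have [conn acyc] := tree.
have repV := gen_rep [set: T] sym.
have repVc := gen_rep [set: T] (compl_sym sym).
have LB : (#|T|.-1 <= mvr e [set: T])%N.
  by apply: mvr_ge repV _; apply: lower_tree.
have monoc : forall S : {set T}, (mvr (compl_rel e) S <= mvr (compl_rel e) [set: T])%N.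
  by move=> S; apply: mvr_mono repVc; apply: subsetT.
have mono : forall S : {set T}, (mvr e S <= mvr e [set: T])%N.
  by move=> S; apply: mvr_mono repV; apply: subsetT.
have main : forall S : {set T}, S != set0 -> S \proper [set: T] ->
   (mvr e S < mvr e [set: T])%N \/
   ((mvr (compl_rel e) S < mvr (compl_rel e) [set: T])%N /\ is_star e).
  move=> S S0 SP.
  have [v vS] : exists v, v \notin S.
    case: (pickP (fun x => x \notin S)) => [x xS|H]; first by exists x.
    move: SP; rewrite properT => /negP; case.
    by apply/eqP/setP => x; rewrite inE; have := H x => /negbFE.
  have SsubV : S \subset [set~ v].
    by apply/subsetP => x xS; rewrite !inE; apply/eqP => h; rewrite -h xS in vS.
  case: (boolP [exists u, exists w, [&& u != v, w != v & e u w]]) => [/existsP [u /existsP [w /and3P [uv wv euw]]]|noE].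
    left.
    have [par [dist [HP1 [HP2 HP3]]]] := tree_parent sym irr conn acyc u.
    have [[wu pw]|[uu _]] := HP3 _ _ euw; last by rewrite eqxx in uu.
    have := upper sym HP1 HP3 (S := [set~ v]) (c := w).
    rewrite !inE uv wv => /(_ isT isT wu (esym pw)) H.
    have H2 := has_orth_rep_sub SsubV H.
    have := mvr_le H2; rewrite cardsC1.
    have n2 : (2 <= #|T|)%N.
      have := subset_leq_card (subsetT [set u; w]); rewrite cards2 eq_sym wu.
      by rewrite cardsT.
    move: LB; lia.
  right.
  have adj : forall w, w != v -> e w v.
    move=> w wv; have /connectP [p pp lp] := conn w v.
    case: p pp lp => [|x p] /=; first by move=> _ h; rewrite h eqxx in wv.
    case/andP => ewx _ _; have [xv'|xv] := eqVneq x v; first by rewrite -xv'.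
    by move/negP: noE; case; apply/existsP; exists w; apply/existsP; exists x; rewrite wv xv ewx.
  split.
    have C1 : has_orth_rep (compl_rel e) S 1.
      exists (fun _ => const_mx 1); split.
        by move=> _ _; apply/eqP => /matrixP /(_ 0 0); rewrite !mxE => /eqP; rewrite oner_eq0.
      move=> x y xS yS xy; rewrite /dotR big_ord1 !mxE mulr1 /compl_rel xy /=.
      have -> : e x y = false.
        apply/negP => exy; move/negP: noE; case; apply/existsP; exists x; apply/existsP; exists y.
        rewrite exy andbT; move/subsetP: SsubV => sub.
        by move: (sub _ xS) (sub _ yS); rewrite !inE => -> ->.
      by split => // /eqP; rewrite oner_eq0.
    have := mvr_le C1.
    have [w wS] : exists w, w \in S by apply/set0Pn.
    have wv : w != v by apply/eqP => h; rewrite -h wS in vS.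
    have G2 : (2 <= mvr (compl_rel e) [set: T])%N.
      apply: mvr_ge repVc _ => d [phi [Hnz Hor]].
      have vw : v != w by rewrite eq_sym.
      have := Hor v w (in_setT _) (in_setT _) vw.
      rewrite /compl_rel sym (adj w wv) andbF /= => [[_ /(_ isT) H0]].
      have nv := Hnz v (in_setT _); have nw := Hnz w (in_setT _).
      case: d phi Hnz Hor H0 nv nw => [|[|d]] phi _ _ H0 nv nw //.
        by move: nw; rewrite (thinmx0 (phi w)) eqxx.
      move: H0; rewrite /dotR big_ord1 => /eqP; rewrite mulf_eq0 => /orP [] /eqP h.
        by move: nv => /eqP; case; apply/rowP => i; rewrite ord1 h mxE.
      by move: nw => /eqP; case; apply/rowP => i; rewrite ord1 h mxE.
    by move=> h; apply: leq_ltn_trans h G2.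
  exists v => x y.
  have [->|xv] := eqVneq x v; have [->|yv] := eqVneq y v.
  - by rewrite irr.
  - by rewrite /= sym adj.
  - by rewrite /= adj.
  rewrite /=.
  apply/negP => exy; move/negP: noE; case; apply/existsP; exists x; apply/existsP; exists y.
  by rewrite xv yv exy.
split.
  move=> S S0 SP; case: (main S S0 SP) => [h|[h _]].
    by have := monoc S; lia.
  by have := mono S; lia.
move=> nstar S S0 SP; case: (main S S0 SP) => [//|[_ st]].
by case: nstar.
Qed.
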